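(* Let $K$ be a valued field, $d\ge 1$, and $Y\subseteq K^d$ finite and nonempty. Then there is $Y_0\subseteq Y$ with $|Y_0|\le d+1$ and $\operatorname{conv}(Y_0)=\operatorname{conv}(Y)$.
   Context: $K$ is a field with a valuation $\nu:K\to\Gamma\cup\{\infty\}$ and valuation ring $\mathcal{O}=\{x:\nu(x)\ge 0\}$. For $Y\subseteq K^d$, $\operatorname{conv}(Y)=\{\sum_{i=1}^n\alpha_iy_i: n\ge1, y_i\in Y,\alpha_i\in\mathcal{O},\sum_i\alpha_i=1\}$. *)

(* Defs.v *)
From HB Require Import structures.
From mathcomp Require Import all_boot all_order all_algebra.
From mathcomp Require Import finmap.
Set Implicit Arguments. Unset Strict Implicit. Unset Printing Implicit Defensive.
Import Order.TTheory GRing.Theory.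
Local Open Scope ring_scope.


Definition is_ordered_abelian_group (G : zmodType) (leG : rel G) : Prop :=
  [/\ reflexive leG, transitive leG, antisymmetric leG, total leG &
      forall x y z : G, leG x y -> leG (x + z) (y + z)].

(* Order on Gamma ∪ {∞}, with ∞ encoded as None. *)
Definition leGinf (G : zmodType) (leG : rel G) (a b : option G) : bool :=
  match a, b with
  | _, None => true
  | None, Some _ => false
  | Some x, Some y => leG x y
  end.

Definition addGinf (G : zmodType) (a b : option G) : option G :=
  match a, b with
  | Some x, Some y => Some (x + y)
  | _, _ => None
  end.

Definition is_valuation (K : fieldType) (G : zmodType) (leG : rel G)
    (nu : K -> option G) : Prop :=
  [/\ forall x : K, nu x = None <-> x = 0,
      forall x y : K, nu (x * y) = addGinf (nu x) (nu y) &
      forall x y : K, leGinf leG (nu x) (nu (x + y)) \/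
                      leGinf leG (nu y) (nu (x + y)) ].

Definition val_ring (K : fieldType) (G : zmodType) (leG : rel G)
    (nu : K -> option G) (x : K) : Prop :=
  leGinf leG (Some 0) (nu x).

Definition in_conv (K : fieldType) (G : zmodType) (leG : rel G)
    (nu : K -> option G) (d : nat) (Y : {fset 'rV[K]_d}) (x : 'rV[K]_d) : Prop :=
  exists (n : nat) (y : 'I_n -> 'rV[K]_d) (a : 'I_n -> K),
    [/\ (0 < n)%N,
        forall i, y i \in Y,
        forall i, val_ring leG nu (a i),
        \sum_(i < n) a i = 1 &
        x = \sum_(i < n) a i *: y i].

(* Main.v *)
Require Import Defs.
From HB Require Import structures.
From mathcomp Require Import all_boot all_order all_algebra.
From mathcomp Require Import finmap.
Set Implicit Arguments. Unset Strict Implicit. Unset Printing Implicit Defensive.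
Import Order.TTheory GRing.Theory.
Local Open Scope ring_scope.

Lemma leGinf_trans (G : zmodType) (leG : rel G) :
  is_ordered_abelian_group leG -> transitive (leGinf leG).
Proof.
case=> _ tr _ _ _ [b|] [a|] [c|] //=; exact: tr.
Qed.

Lemma leGinf_refl (G : zmodType) (leG : rel G) :
  is_ordered_abelian_group leG -> reflexive (leGinf leG).
Proof. by case=> r _ _ _ _ [a|] //=. Qed.

Lemma leGinf_total (G : zmodType) (leG : rel G) :
  is_ordered_abelian_group leG -> total (leGinf leG).
Proof. by case=> _ _ _ t _ [a|] [b|] //=. Qed.

Lemma twice0 (G : zmodType) (leG : rel G) :
  is_ordered_abelian_group leG -> forall g : G, g + g = 0 -> g = 0.
Proof.
case=> r tr an t cp g gg.
case/orP: (t g 0) => h.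
- have := cp _ _ g h; rewrite gg add0r => h2.
  by apply: an; rewrite h h2.
- have := cp _ _ g h; rewrite gg add0r => h2.
  by apply: an; rewrite h h2.
Qed.


Lemma nu1 (K : fieldType) (G : zmodType) (leG : rel G) (nu : K -> option G) :
  is_ordered_abelian_group leG -> is_valuation leG nu -> nu 1 = Some 0.
Proof.
move=> hG [h0 hm _].
case E: (nu 1) => [g|]; last by have := (proj1 (h0 1)) E; move/eqP; rewrite oner_eq0.
have := hm 1 1; rewrite mulr1 E /= => -[] gg.
by congr Some; apply: (@addrI _ g); rewrite addr0.
Qed.

Lemma nuN1 (K : fieldType) (G : zmodType) (leG : rel G) (nu : K -> option G) :
  is_ordered_abelian_group leG -> is_valuation leG nu -> nu (-1) = Some 0.
Proof.
move=> hG hv; have [h0 hm _] := hv.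
case E: (nu (-1)) => [g|]; last first.
  by have := (proj1 (h0 (-1))) E; move/eqP; rewrite oppr_eq0 oner_eq0.
have := hm (-1) (-1); rewrite mulrNN mulr1 (nu1 hG hv) E /= => -[] /esym gg.
by rewrite (twice0 hG gg).
Qed.

Lemma nuN (K : fieldType) (G : zmodType) (leG : rel G) (nu : K -> option G) :
  is_ordered_abelian_group leG -> is_valuation leG nu -> forall x, nu (- x) = nu x.
Proof.
move=> hG hv x; have [h0 hm _] := hv.
rewrite -mulN1r hm (nuN1 hG hv); case: (nu x) => //= g; by rewrite add0r.
Qed.

Lemma nuV (K : fieldType) (G : zmodType) (leG : rel G) (nu : K -> option G) :
  is_ordered_abelian_group leG -> is_valuation leG nu -> forall x g, nu x = Some g ->
  nu (x^-1) = Some (- g).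
Proof.
move=> hG hv x g E; have [h0 hm _] := hv.
have x0 : x != 0 by apply/eqP => x0; move: (proj2 (h0 x) x0); rewrite E.
have := hm x x^-1; rewrite mulfV // (nu1 hG hv) E.
case: (nu x^-1) => //= h [] gh; congr Some.
by apply/eqP; rewrite -addr_eq0 addrC -gh.
Qed.

Lemma O0 (K : fieldType) (G : zmodType) (leG : rel G) (nu : K -> option G) :
  is_valuation leG nu -> val_ring leG nu 0.
Proof. by case=> h0 _ _; rewrite /val_ring (proj2 (h0 0)). Qed.

Lemma O1 (K : fieldType) (G : zmodType) (leG : rel G) (nu : K -> option G) :
  is_ordered_abelian_group leG -> is_valuation leG nu -> val_ring leG nu 1.
Proof. by move=> hG hv; rewrite /val_ring (nu1 hG hv) /=; case: hG. Qed.

Lemma OD (K : fieldType) (G : zmodType) (leG : rel G) (nu : K -> option G) :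
  is_ordered_abelian_group leG -> is_valuation leG nu -> forall a b,
  val_ring leG nu a -> val_ring leG nu b -> val_ring leG nu (a + b).
Proof.
move=> hG [_ _ hu] a b ha hb; rewrite /val_ring.
case: (hu a b) => h; exact: (leGinf_trans hG _ h).
Qed.

Lemma OM (K : fieldType) (G : zmodType) (leG : rel G) (nu : K -> option G) :
  is_ordered_abelian_group leG -> is_valuation leG nu -> forall a b,
  val_ring leG nu a -> val_ring leG nu b -> val_ring leG nu (a * b).
Proof.
move=> hG [_ hm _] a b; rewrite /val_ring hm.
case: (nu a) => [g|] //; case: (nu b) => [h|] //= ha hb.
case: hG => _ tr _ _ cp.
apply: (tr h) => //; have := cp _ _ h ha; by rewrite add0r.
Qed.

Lemma ON (K : fieldType) (G : zmodType) (leG : rel G) (nu : K -> option G) :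
  is_ordered_abelian_group leG -> is_valuation leG nu -> forall a,
  val_ring leG nu a -> val_ring leG nu (- a).
Proof. by move=> hG hv a; rewrite /val_ring (nuN hG hv). Qed.

Lemma Osum (K : fieldType) (G : zmodType) (leG : rel G) (nu : K -> option G) :
  is_ordered_abelian_group leG -> is_valuation leG nu -> forall (I : Type) (r : seq I) (P : pred I) (F : I -> K),
  (forall i, P i -> val_ring leG nu (F i)) -> val_ring leG nu (\sum_(i <- r | P i) F i).
Proof.
move=> hG hv I r P F h; apply: big_ind => //; first exact: O0.
exact: OD.
Qed.

Lemma Oratio (K : fieldType) (G : zmodType) (leG : rel G) (nu : K -> option G) :
  is_ordered_abelian_group leG -> is_valuation leG nu -> forall a c,
  c != 0 -> leGinf leG (nu c) (nu a) -> val_ring leG nu (a / c).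
Proof.
move=> hG hv a c c0 le; have [h0 hm _] := hv.
case Ec: (nu c) le => [g|]; last by move: (proj1 (h0 c) Ec); move/eqP: c0.
rewrite /val_ring hm (nuV hG hv Ec).
case: (nu a) => [h|] //= le.
case: hG => _ _ _ _ cp; have := cp _ _ (- g) le; by rewrite subrr.
Qed.

Definition convf (K : fieldType) (G : zmodType) (leG : rel G)
    (nu : K -> option G) (d : nat) (Y : {fset 'rV[K]_d}) (x : 'rV[K]_d) : Prop :=
  exists f : 'rV[K]_d -> K,
    [/\ forall z, z \in Y -> val_ring leG nu (f z),
        \sum_(z <- Y) f z = 1 &
        x = \sum_(z <- Y) f z *: z].

Lemma sum_regroup (T : choiceType) (V : nmodType) (Y : {fset T}) n (y : 'I_n -> T)
   (F : 'I_n -> V) : (forall i, y i \in Y) ->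
   \sum_(z <- Y) \sum_(i < n | y i == z) F i = \sum_(i < n) F i.
Proof.
move=> hy; rewrite (exchange_big_dep xpredT) //=.
apply: eq_bigr => i _.
rewrite (eq_bigl (fun z => z == y i)); last by move=> z; rewrite eq_sym.
rewrite big_mkcond (big_fsetD1 (y i)) //= eqxx big1_seq ?addr0 // => z.
by rewrite /= in_fsetD1 => /andP [/negbTE ->].
Qed.

Lemma in_conv_convf (K : fieldType) (G : zmodType) (leG : rel G)
    (nu : K -> option G) (hG : is_ordered_abelian_group leG) (hv : is_valuation leG nu)
    (d : nat) (Y : {fset 'rV[K]_d}) (x : 'rV[K]_d) :
  in_conv leG nu Y x <-> convf leG nu Y x.
Proof.
split.
- case=> n [y [a [n0 hy ha hs hx]]].
  exists (fun z => \sum_(i < n | y i == z) a i); split.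
  + by move=> z _; apply: Osum.
  + by rewrite sum_regroup.
  + rewrite hx -(sum_regroup (fun i => a i *: y i) hy).
    apply: eq_bigr => z _; rewrite scaler_suml; apply: eq_bigr => i /eqP -> //.
- case=> f [hf hs hx].
  have n0 : (0 < size (enum_fset Y))%N.
    move: hs; case: (enum_fset Y) => [|//]; rewrite big_nil => /eqP; by rewrite eq_sym oner_eq0.
  set s := enum_fset Y.
  exists (size s), (fun i => nth 0 s i), (fun i => f (nth 0 s i)); split => //.
  + by move=> i; apply: mem_nth.
  + by move=> i; apply: hf; apply: mem_nth.
  + by rewrite -hs (big_nth 0) big_mkord.
  + by rewrite hx (big_nth 0) big_mkord.
Qed.

Lemma convf_sub1 (K : fieldType) (G : zmodType) (leG : rel G)
    (nu : K -> option G) (hG : is_ordered_abelian_group leG) (hv : is_valuation leG nu)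
    (d : nat) (Y : {fset 'rV[K]_d}) (y x : 'rV[K]_d) :
  y \in Y -> convf leG nu (Y `\ y)%fset x -> convf leG nu Y x.
Proof.
move=> yY [f [hf hs hx]].
exists (fun z => if z == y then 0 else f z); split.
- move=> z zY; case: eqP => [_|/eqP zy]; first exact: O0.
  by apply: hf; rewrite in_fsetD1 zy.
- rewrite (big_fsetD1 y) //= eqxx add0r -hs; apply: eq_big_seq => z.
  by rewrite in_fsetD1 => /andP [/negbTE ->].
- rewrite (big_fsetD1 y) //= eqxx scale0r add0r hx; apply: eq_big_seq => z.
  by rewrite in_fsetD1 => /andP [/negbTE ->].
Qed.

Lemma convf_rem (K : fieldType) (G : zmodType) (leG : rel G)
    (nu : K -> option G) (hG : is_ordered_abelian_group leG) (hv : is_valuation leG nu)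
    (d : nat) (Y : {fset 'rV[K]_d}) (y x : 'rV[K]_d) :
  y \in Y -> convf leG nu (Y `\ y)%fset y -> convf leG nu Y x ->
  convf leG nu (Y `\ y)%fset x.
Proof.
move=> yY [b [hb bs bx]] [f [hf hs hx]].
exists (fun z => f z + f y * b z); split.
- move=> z zY; apply: OD => //; last apply: OM => //.
  + by apply: hf; move: zY; rewrite in_fsetD1 => /andP [].
  + exact: hf.
  + exact: hb.
- by rewrite big_split /= -mulr_sumr bs mulr1 -hs (big_fsetD1 _ yY) /= addrC.
- rewrite hx (big_fsetD1 _ yY) /=.
  rewrite [in RHS](eq_bigr (fun z => f z *: z + f y *: (b z *: z))); last first.
    by move=> z _; rewrite scalerDl scalerA.
  by rewrite big_split /= -scaler_sumr -bx addrC.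
Qed.

Lemma exists_min (T : eqType) (A : Type) (r : rel A) : transitive r -> total r ->
  forall (F : T -> A) (s : seq T), s != [::] ->
  exists2 z, z \in s & forall w, w \in s -> r (F z) (F w).
Proof.
move=> tr to F; elim=> [//|a t IH] _.
case: t IH => [|b t] IH.
  exists a; first by rewrite inE.
  by move=> w; rewrite inE => /eqP ->; case/orP: (to (F a) (F a)).
case: IH => // z zt hz.
case/orP: (to (F a) (F z)) => h.
- exists a; first by rewrite inE eqxx.
  move=> w; rewrite inE => /orP [/eqP ->|wt].
  + by case/orP: (to (F a) (F a)).
  + exact: tr h (hz w wt).
- exists z; first by rewrite inE zt orbT.
  move=> w; rewrite inE => /orP [/eqP ->|wt] //.
  exact: hz.
Qed.

Lemma key (K : fieldType) (G : zmodType) (leG : rel G)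
    (nu : K -> option G) (hG : is_ordered_abelian_group leG) (hv : is_valuation leG nu)
    (d : nat) (Y : {fset 'rV[K]_d}) :
  (d.+1 < #|` Y|)%fset%N -> exists2 y, y \in Y & convf leG nu (Y `\ y)%fset y.
Proof.
move=> hY.
set s := enum_fset Y.
have us : uniq s by exact: fset_uniq.
set m := size s.
have hm : (d + 1 < m)%N by rewrite addn1.
pose A : 'M[K]_(m, d + 1) := \matrix_(k < m) row_mx (nth 0 s k) (const_mx 1 : 'rV_1).
have rk : (0 < \rank (kermx A))%N.
  by rewrite mxrank_ker subn_gt0 (leq_ltn_trans (rank_leq_col A)).
have kn0 : kermx A != 0 by rewrite -mxrank_eq0 -lt0n.
have [i0 hi0] : exists i0, row i0 (kermx A) != 0.
  case: (pickP (fun i => row i (kermx A) != 0)) => [i0 hi0|h]; first by exists i0.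
  move/eqP: kn0 => []; apply/row_matrixP => i; rewrite row0; exact/eqP/negbFE/h.
set c := row i0 (kermx A).
have hc : c *m A = 0 by rewrite -row_mul mulmx_ker row0.
have [k0 hk0] : exists k0, c 0 k0 != 0.
  case: (pickP (fun k => c 0 k != 0)) => [k hk|h]; first by exists k.
  by move: hi0; rewrite -/c => /eqP []; apply/rowP => k; rewrite [RHS]mxE; exact/eqP/negbFE/h.
have ent i : \sum_(k < m) c 0 k * row_mx (nth 0 s k) (const_mx 1 : 'rV_1) 0 i = 0.
  transitivity ((c *m A) ord0 i); last by rewrite hc mxE.
  by rewrite [RHS]mxE; apply: eq_bigr => k _; rewrite /A !mxE.
have S1 : \sum_(k < m) c 0 k = 0.
  rewrite -[RHS](ent (rshift d ord0)); apply: eq_bigr => k _.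
  by rewrite row_mxEr !mxE mulr1.
have S2 : \sum_(k < m) c 0 k *: nth 0 s k = 0.
  apply/rowP => i; rewrite summxE [RHS]mxE -[RHS](ent (lshift 1 i)).
  by apply: eq_bigr => k _; rewrite row_mxEl mxE.
pose cf z := c 0 (insubd k0 (index z s)).
have cf_nth (k : 'I_m) : cf (nth 0 s k) = c 0 k.
  rewrite /cf; congr (c 0 _); apply: val_inj; rewrite val_insubd index_uniq //.
  by rewrite ltn_ord.
have sumY (V : nmodType) (F : 'rV[K]_d -> V) :
    \sum_(z <- Y) F z = \sum_(k < m) F (nth 0 s k).
  by rewrite (big_nth 0) big_mkord.
have s0 : s != [::] by rewrite -size_eq0 -/m -lt0n (leq_ltn_trans _ hm).
have [y ys ymin] := exists_min (leGinf_trans hG) (leGinf_total hG) (fun z => nu (cf z)) s0.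
have yY : y \in Y by [].
have cy0 : cf y != 0.
  apply/eqP => cy; have [h0 _ _] := hv.
  move: (ymin (nth 0 s k0) (mem_nth _ (ltn_ord k0))); rewrite (proj2 (h0 _) cy) cf_nth.
  case E: (nu (c 0 k0)) => //= _.
  by move: hk0; rewrite (proj1 (h0 _) E) eqxx.
have Ssum : \sum_(z <- (Y `\ y)%fset) cf z = - cf y.
  apply/eqP; rewrite -addr_eq0 addrC -(big_fsetD1 _ yY) sumY /=.
  by rewrite (eq_bigr (fun k => c 0 k)) ?S1 // => k _; rewrite cf_nth.
have Svec : \sum_(z <- (Y `\ y)%fset) cf z *: z = - (cf y *: y).
  apply/eqP; rewrite -addr_eq0 addrC -(big_fsetD1 (F:=fun z => cf z *: z) _ yY) sumY /=.
  by rewrite (eq_bigr (fun k => c 0 k *: nth 0 s k)) ?S2 // => k _; rewrite cf_nth.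
have ncy0 : - cf y != 0 by rewrite oppr_eq0.
exists y => //; exists (fun z => cf z / (- cf y)); split.
- move=> z; rewrite in_fsetD1 => /andP [_ zY].
  apply: Oratio => //; rewrite (nuN hG hv); exact: ymin.
- by rewrite -mulr_suml Ssum divff.
- rewrite (eq_bigr (fun z => (- cf y)^-1 *: (cf z *: z))); last first.
    by move=> z _; rewrite scalerA mulrC.
  by rewrite -scaler_sumr Svec -scaleNr scalerA mulVf // scale1r.
Qed.

Lemma main_ind (K : fieldType) (G : zmodType) (leG : rel G)
    (nu : K -> option G) (hG : is_ordered_abelian_group leG) (hv : is_valuation leG nu)
    (d : nat) (n : nat) : forall (Y : {fset 'rV[K]_d}), (#|` Y| <= n)%N ->
  exists Y0 : {fset 'rV[K]_d},
    [/\ (Y0 `<=` Y)%fset, (#|` Y0|%fset <= d.+1)%N &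
        forall x : 'rV[K]_d, convf leG nu Y0 x <-> convf leG nu Y x].
Proof.
elim: n => [|n IH] Y hY.
  by exists Y; split => //; rewrite (leq_trans hY).
case: (leqP #|` Y| d.+1) => hd; first by exists Y.
have [y yY hy] := key hG hv hd.
have : (#|` (Y `\ y)%fset| <= n)%N.
  by move: hY; rewrite (cardfsD1 y Y) yY.
case/IH => Y0 [sub card eqv].
exists Y0; split => //.
  by apply: (fsubset_trans sub); apply: fsubsetDl.
move=> x; rewrite eqv; split.
- exact: convf_sub1.
- exact: convf_rem.
Qed.

Theorem corollary2p8 (K : fieldType) (G : zmodType) (leG : rel G)
    (nu : K -> option G)
    (hG : is_ordered_abelian_group leG) (hnu : is_valuation leG nu)
    (d : nat) (hd : (1 <= d)%N)
    (Y : {fset 'rV[K]_d}) (hY : Y != fset0) :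
  exists Y0 : {fset 'rV[K]_d},
    [/\ (Y0 `<=` Y)%fset, (#|` Y0|%fset <= d.+1)%N &
        forall x : 'rV[K]_d, in_conv leG nu Y0 x <-> in_conv leG nu Y x].
Proof.
have [Y0 [sub card eqv]] := main_ind hG hnu (leqnn #|` Y|).
exists Y0; split => // x.
split => h; apply/(in_conv_convf hG hnu); apply/eqv; exact/(in_conv_convf hG hnu).
Qed.
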